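(* Let $P:\mathcal C^{op}\to\mathbf{PreOrd}$ be a doctrine and $J$ a Grothendieck topology on $\mathcal C\rtimes P$. Then there is a chain of isomorphisms of doctrines $$Z(P,J)\cong Z(P^\top,J^\top)\cong\mathfrak I(P^\top,J^\top)\cong\mathfrak I(P,J).$$ In particular the topos-theoretically defined doctrine $Z(P,J)$ is isomorphic to the explicitly described doctrine $\mathfrak I(P,J)$.
   Context: For a doctrine $P:\mathcal C^{op}\to\mathbf{PreOrd}$, $\mathcal C\rtimes P$ has objects $(c,x)$, $x\in P(c)$, and morphisms $f:(c,x)\to(d,y)$ the $f:c\to d$ with $x\le P(f)(y)$; $p_P:\mathcal C\rtimes P\to\mathcal C$ is the projection. Topos-theoretic completion $Z(P,J):\mathcal C^{op}\to\mathbf{Frm}$: for $c\in\mathcal C$, $Z(P,J)(c)$ is the frame of subobjects, in $\mathbf{Sh}(\mathcal C\rtimes P,J)$, of the sheafification $a_J(\mathrm{Hom}_{\mathcal C}(p_P(-),c))$ of the presheaf $\mathrm{Hom}_{\mathcal C}(p_P(-),c)$ on $\mathcal C\rtimes P$; for $f:d\to c$, $Z(P,J)(f)$ is pullback along $a_J(\mathrm{Hom}_{\mathcal C}(p_P(-),f))$. (Equivalently, $Z(P,J)$ is the direct image of the subobject classifier of $\mathbf{Sh}(\mathcal C\rtimes P,J)$ along the geometric morphism to $\mathbf{Sets}^{\mathcal C^{op}}$ induced by $p_P$.) Explicit completion $\mathfrak I(P,J)$: $\mathfrak I(P,J)(c)$ is the set, ordered by inclusion, of sets $S$ of pairs $(f,x)$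 with $f:d\to c$ in $\mathcal C$ and $x\in P(d)$ such that (a) if $(f,x)\in S$, $g:e\to d$, $y\in P(e)$ and $y\le P(g)(x)$ then $(f\circ g,y)\in S$; (b) if $f:d\to c$, $x\in P(d)$ and there is a $J$-covering family $\{h_i:(e_i,y_i)\to(d,x)\}$ in $\mathcal C\rtimes P$ with $(f\circ h_i,y_i)\in S$ for all $i$, then $(f,x)\in S$; and $\mathfrak I(P,J)(f)(S)=\{(g,y):(f\circ g,y)\in S\}$ for $f:d\to c$. Free top completion: $P^\top(c)=P(c)\oplus\{\top_c\}$ ($P(c)$ with a new top element), $P^\top(f)$ extends $P(f)$ with $\top_c\mapsto\top_d$. $J^\top$ on $\mathcal C\rtimes P^\top$: a sieve on $(c,x)$, $x\in P(c)$, covers iff it is $J$-covering; a sieve $S$ on $(c,\top_c)$ covers iff $f^*(S)$ is $J$-covering for every $f:(d,x)\to(c,\top_c)$ with $x\in P(d)$. *)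

(* Defs.v *)
From Stdlib Require Import ProofIrrelevance.
Set Implicit Arguments.
Unset Strict Implicit.

(** * Categories (hom-types with Leibniz equality of morphisms) *)
Record Cat := MkCat {
  ob : Type;
  hom : ob -> ob -> Type;
  idm : forall a, hom a a;
  cmp : forall a b c, hom b c -> hom a b -> hom a c;
  cmp_idl : forall a b (f : hom a b), cmp (idm b) f = f;
  cmp_idr : forall a b (f : hom a b), cmp f (idm a) = f;
  cmp_assoc : forall a b c d (h : hom c d) (g : hom b c) (f : hom a b),
     cmp h (cmp g f) = cmp (cmp h g) f }.
Arguments hom : clear implicits.
Arguments idm {_} a.
Arguments cmp {_ _ _ _} _ _.

(** * Doctrines  P : C^op -> PreOrd  (strict functors) *)
Record Doctrine (C : Cat) := MkDoc {
  dP : ob C -> Type;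
  dle : forall c, dP c -> dP c -> Prop;
  dle_refl : forall c (x : dP c), dle x x;
  dle_trans : forall c (x y z : dP c), dle x y -> dle y z -> dle x z;
  dmap : forall c d, hom C d c -> dP c -> dP d;
  dmap_mono : forall c d (f : hom C d c) (x y : dP c),
     dle x y -> dle (dmap f x) (dmap f y);
  dmap_id : forall c (x : dP c), dmap (idm c) x = x;
  dmap_cmp : forall c d e (f : hom C d c) (g : hom C e d) (x : dP c),
     dmap (cmp f g) x = dmap g (dmap f x) }.
Arguments dP {C} _ c.
Arguments dle {C _ c}.
Arguments dmap {C _ c d}.

Lemma sig_eq (A : Type) (Q : A -> Prop) (u v : sig Q) :
  proj1_sig u = proj1_sig v -> u = v.
Proof. destruct u, v; simpl; intros ->; f_equal; apply proof_irrelevance. Qed.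

(** * The Grothendieck construction  C ⋊ P  and the projection p_P *)
Section CP.
Variables (C : Cat) (P : Doctrine C).
Definition CPob := {c : ob C & dP P c}.
Definition CPhom (a b : CPob) :=
  {f : hom C (projT1 a) (projT1 b) | dle (projT2 a) (dmap f (projT2 b))}.
Lemma CPid_pf (a : CPob) : dle (projT2 a) (dmap (idm (projT1 a)) (projT2 a)).
Proof. rewrite dmap_id; apply dle_refl. Qed.
Definition CPid (a : CPob) : CPhom a a := exist _ (idm _) (CPid_pf a).
Lemma CPcmp_pf (a b c : CPob) (g : CPhom b c) (f : CPhom a b) :
  dle (projT2 a) (dmap (cmp (proj1_sig g) (proj1_sig f)) (projT2 c)).
Proof.
  rewrite dmap_cmp. eapply dle_trans. apply (proj2_sig f).
  apply dmap_mono, (proj2_sig g).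
Qed.
Definition CPcmp (a b c : CPob) (g : CPhom b c) (f : CPhom a b) : CPhom a c :=
  exist _ (cmp (proj1_sig g) (proj1_sig f)) (CPcmp_pf g f).
Lemma CPcmp_idl a b (f : CPhom a b) : CPcmp (CPid b) f = f.
Proof. apply sig_eq; simpl; apply cmp_idl. Qed.
Lemma CPcmp_idr a b (f : CPhom a b) : CPcmp f (CPid a) = f.
Proof. apply sig_eq; simpl; apply cmp_idr. Qed.
Lemma CPcmp_assoc a b c d (h : CPhom c d) (g : CPhom b c) (f : CPhom a b) :
  CPcmp h (CPcmp g f) = CPcmp (CPcmp h g) f.
Proof. apply sig_eq; simpl; apply cmp_assoc. Qed.
Definition CP : Cat := MkCat CPcmp_idl CPcmp_idr CPcmp_assoc.
End CP.

Definition sieve (D : Cat) (o : ob D) := forall e : ob D, hom D e o -> Prop.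
Definition is_sieve (D : Cat) (o : ob D) (S : sieve o) : Prop :=
  forall e (h : hom D e o) e' (g : hom D e' e), S e h -> S e' (cmp h g).
Definition max_sieve (D : Cat) (o : ob D) : sieve o := fun _ _ => True.
Definition pb_sieve (D : Cat) (o a : ob D) (f : hom D a o) (S : sieve o) : sieve a :=
  fun e h => S e (cmp f h).
Definition gen_sieve (D : Cat) (o : ob D) (I : Type) (e : I -> ob D)
  (h : forall i, hom D (e i) o) : sieve o :=
  fun e' k => exists i (g : hom D e' (e i)), k = cmp (h i) g.

Definition coverage (D : Cat) := forall o : ob D, sieve o -> Prop.

Definition is_topology (D : Cat) (J : coverage D) : Prop :=
  (forall o S, J o S -> is_sieve S) /\
  (forall o, J o (max_sieve (o := o))) /\
  (forall o (S : sieve o) a (f : hom D a o), J o S -> J a (pb_sieve f S)) /\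
  (forall o (S R : sieve o), J o S -> is_sieve R ->
     (forall e (h : hom D e o), S e h -> J e (pb_sieve h R)) -> J o R).

Record Psh (D : Cat) := MkPsh {
  pobj : ob D -> Type;
  pmap : forall a b, hom D a b -> pobj b -> pobj a;
  pmap_id : forall a (x : pobj a), pmap (idm a) x = x;
  pmap_cmp : forall a b c (g : hom D b c) (f : hom D a b) (x : pobj c),
     pmap (cmp g f) x = pmap f (pmap g x) }.
Arguments pobj {D} _ a.
Arguments pmap {D} _ {a b}.

Definition NT (D : Cat) (F G : Psh D) :=
  {eta : forall a, pobj F a -> pobj G a |
     forall a b (f : hom D a b) x, eta a (pmap F f x) = pmap G f (eta b x)}.
Definition ntc (D : Cat) (F G : Psh D) (u : NT F G) a : pobj F a -> pobj G a :=
  proj1_sig u a.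
Arguments ntc {D F G} u a _.
Lemma ntcomp_pf (D : Cat) (F G H : Psh D) (v : NT G H) (u : NT F G) :
  forall a b (f : hom D a b) x,
    ntc v a (ntc u a (pmap F f x)) = pmap H f (ntc v b (ntc u b x)).
Proof.
  intros. unfold ntc. rewrite (proj2_sig u), (proj2_sig v). reflexivity.
Qed.
Definition ntcomp (D : Cat) (F G H : Psh D) (v : NT G H) (u : NT F G) : NT F H :=
  exist _ (fun a x => ntc v a (ntc u a x)) (ntcomp_pf v u).
Definition nteq (D : Cat) (F G : Psh D) (u v : NT F G) : Prop :=
  forall a x, ntc u a x = ntc v a x.

Definition is_sheaf (D : Cat) (J : coverage D) (F : Psh D) : Prop :=
  forall o (S : sieve o), J o S ->
  forall s : forall e (h : hom D e o), S e h -> pobj F e,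
  (forall e (h : hom D e o) (Hh : S e h) e' (g : hom D e' e) (Hg : S e' (cmp h g)),
      s e' (cmp h g) Hg = pmap F g (s e h Hh)) ->
  exists x, (forall e (h : hom D e o) (Hh : S e h), pmap F h x = s e h Hh) /\
     (forall y, (forall e (h : hom D e o) (Hh : S e h), pmap F h y = s e h Hh) -> y = x).

Definition is_sheafification (D : Cat) (J : coverage D) (X A : Psh D) (eta : NT X A) : Prop :=
  is_sheaf J A /\
  forall G, is_sheaf J G -> forall t : NT X G,
    exists u : NT A G, nteq (ntcomp u eta) t /\
      forall u' : NT A G, nteq (ntcomp u' eta) t -> nteq u' u.

Definition is_mono_sh (D : Cat) (J : coverage D) (G A : Psh D) (m : NT G A) : Prop :=
  forall H, is_sheaf J H -> forall u v : NT H G,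
    nteq (ntcomp m u) (ntcomp m v) -> nteq u v.

Record SubObj (D : Cat) (J : coverage D) (A : Psh D) := MkSub {
  so_dom : Psh D;
  so_sheaf : is_sheaf J so_dom;
  so_m : NT so_dom A;
  so_mono : is_mono_sh J so_m }.
Arguments so_dom {D J A}.
Arguments so_m {D J A}.

Definition so_le (D : Cat) (J : coverage D) (A : Psh D) (m n : SubObj J A) : Prop :=
  exists u : NT (so_dom m) (so_dom n), nteq (ntcomp (so_m n) u) (so_m m).

Definition is_pullback_sub (D : Cat) (J : coverage D) (A A' : Psh D) (g : NT A' A)
  (m : SubObj J A) (m' : SubObj J A') : Prop :=
  exists q : NT (so_dom m') (so_dom m),
    nteq (ntcomp (so_m m) q) (ntcomp g (so_m m')) /\
    forall H, is_sheaf J H -> forall (u : NT H A') (v : NT H (so_dom m)),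
      nteq (ntcomp g u) (ntcomp (so_m m) v) ->
      exists w : NT H (so_dom m'),
        (nteq (ntcomp (so_m m') w) u /\ nteq (ntcomp q w) v) /\
        forall w' : NT H (so_dom m'),
          nteq (ntcomp (so_m m') w') u -> nteq (ntcomp q w') v -> nteq w' w.

(** * The representable-along-p_P presheaves  Hom_C(p_P(-), c)  on C ⋊ P *)
Section HomP.
Variables (C : Cat) (P : Doctrine C).
Lemma homP_id (c : ob C) (a : ob (CP P)) (x : hom C (projT1 a) c) :
  cmp x (proj1_sig (@idm (CP P) a)) = x.
Proof. apply cmp_idr. Qed.
Lemma homP_cmp (c : ob C) (a b d : ob (CP P)) (g : hom (CP P) b d) (f : hom (CP P) a b)
  (x : hom C (projT1 d) c) :
  cmp x (proj1_sig (cmp g f)) = cmp (cmp x (proj1_sig g)) (proj1_sig f).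
Proof. apply cmp_assoc. Qed.
Definition homP (c : ob C) : Psh (CP P) :=
  @MkPsh (CP P) (fun a => hom C (projT1 a) c)
    (fun a b (f : hom (CP P) a b) (x : hom C (projT1 b) c) => cmp x (proj1_sig f))
    (@homP_id c) (@homP_cmp c).
Lemma homPmap_pf (c d : ob C) (f : hom C d c) :
  forall (a b : ob (CP P)) (k : hom (CP P) a b) (x : pobj (homP d) b),
    cmp f (pmap (homP d) k x) = pmap (homP c) k (cmp f x).
Proof. intros; simpl; apply cmp_assoc. Qed.
Definition homPmap (c d : ob C) (f : hom C d c) : NT (homP d) (homP c) :=
  exist _ (fun a (x : pobj (homP d) a) => (cmp f x : pobj (homP c) a)) (homPmap_pf f).
End HomP.

(** * Isomorphism of doctrines, for doctrines presented by carriers, preorders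
    and (functional up to equivalence) reindexing relations  re f x y  :<->
    "y represents D(f)(x)". *)
Definition doc_iso (C : Cat) (D E : ob C -> Type)
  (leD : forall c, D c -> D c -> Prop) (leE : forall c, E c -> E c -> Prop)
  (reD : forall c d, hom C d c -> D c -> D d -> Prop)
  (reE : forall c d, hom C d c -> E c -> E d -> Prop) : Prop :=
  exists (phi : forall c, D c -> E c) (psi : forall c, E c -> D c),
    (forall c (x y : D c), leD c x y <-> leE c (phi c x) (phi c y)) /\
    (forall c (z : E c), leE c (phi c (psi c z)) z /\ leE c z (phi c (psi c z))) /\
    (forall c d (f : hom C d c) (x : D c) (y : D d),
        reD c d f x y -> reE c d f (phi c x) (phi d y)).

(** * The topos-theoretic completion Z(P,J), relative to a given (chosen)
    sheafification  eta_c : Hom(p_P(-),c) => a_J(Hom(p_P(-),c)). *)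
Section Zdoc.
Variables (C : Cat) (P : Doctrine C) (J : coverage (CP P))
  (a : ob C -> Psh (CP P)) (eta : forall c, NT (homP P c) (a c)).
Definition Zcar (c : ob C) := SubObj J (a c).
Definition Zle (c : ob C) (m n : Zcar c) : Prop := so_le m n.
(** Z(P,J)(f) = pullback along a_J(Hom(p_P(-),f)), the unique map u with
    u ∘ eta_d = eta_c ∘ Hom(p_P(-),f) *)
Definition Zre (c d : ob C) (f : hom C d c) (m : Zcar c) (m' : Zcar d) : Prop :=
  exists u : NT (a d) (a c),
    nteq (ntcomp u (eta d)) (ntcomp (eta c) (homPmap P f)) /\
    is_pullback_sub u m m'.
End Zdoc.

(** * The explicit completion I(P,J) *)
Section Idoc.
Variables (C : Cat) (P : Doctrine C) (J : coverage (CP P)).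
Definition Ipred (c : ob C) := forall d : ob C, hom C d c -> dP P d -> Prop.
Definition Iclosed (c : ob C) (S : Ipred c) : Prop :=
  (forall d (f : hom C d c) (x : dP P d) e (g : hom C e d) (y : dP P e),
      S d f x -> dle y (dmap g x) -> S e (cmp f g) y) /\
  (forall d (f : hom C d c) (x : dP P d),
      (exists (I : Type) (e : I -> ob (CP P))
              (h : forall i, hom (CP P) (e i) (existT _ d x)),
         @J (existT _ d x) (gen_sieve h) /\
         forall i, S (projT1 (e i)) (cmp f (proj1_sig (h i))) (projT2 (e i))) ->
      S d f x).
Definition Icar (c : ob C) := {S : Ipred c | Iclosed S}.
Definition Ile (c : ob C) (S T : Icar c) : Prop :=
  forall d (f : hom C d c) x, proj1_sig S d f x -> proj1_sig T d f x.
Definition Ire (c d : ob C) (f : hom C d c) (S : Icar c) (T : Icar d) : Prop :=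
  forall e (g : hom C e d) y, proj1_sig T e g y <-> proj1_sig S e (cmp f g) y.
End Idoc.

(** * Free top completion P^⊤ (None = the new top element ⊤_c) *)
Section Top.
Variables (C : Cat) (P : Doctrine C).
Definition tle (c : ob C) (u v : option (dP P c)) : Prop :=
  match u, v with
  | _, None => True
  | Some x, Some y => dle x y
  | None, Some _ => False
  end.
Lemma tle_refl c (u : option (dP P c)) : tle u u.
Proof. destruct u; simpl; auto using dle_refl. Qed.
Lemma tle_trans c (u v w : option (dP P c)) : tle u v -> tle v w -> tle u w.
Proof.
  destruct u, v, w; simpl; try tauto. apply dle_trans.
Qed.
Definition tmap (c d : ob C) (f : hom C d c) (u : option (dP P c)) : option (dP P d) :=
  option_map (dmap f) u.
Lemma tmap_mono c d (f : hom C d c) u v : tle u v -> tle (tmap f u) (tmap f v).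
Proof. destruct u, v; simpl; auto using dmap_mono. Qed.
Lemma tmap_id c u : tmap (idm c) u = u.
Proof. destruct u; simpl; auto. rewrite dmap_id; reflexivity. Qed.
Lemma tmap_cmp c d e (f : hom C d c) (g : hom C e d) u :
  tmap (cmp f g) u = tmap g (tmap f u).
Proof. destruct u; simpl; auto. rewrite dmap_cmp; reflexivity. Qed.
Definition Ptop : Doctrine C :=
  @MkDoc C (fun c => option (dP P c)) tle tle_refl tle_trans tmap tmap_mono tmap_id tmap_cmp.

Definition lift_hom (a b : ob (CP P)) (h : hom (CP P) a b) :
  hom (CP Ptop) (existT _ (projT1 a) (Some (projT2 a)))
                (existT _ (projT1 b) (Some (projT2 b))) :=
  exist _ (proj1_sig h) (proj2_sig h).
Definition restrict_sieve (c : ob C) (x : dP P c)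
  (S : sieve (D := CP Ptop) (existT _ c (Some x))) : sieve (D := CP P) (existT _ c x) :=
  fun e h => S (existT _ (projT1 e) (Some (projT2 e))) (lift_hom h).

Variable J : coverage (CP P).
Definition Jtop : coverage (CP Ptop) :=
  fun o => match o as o0 return sieve (D := CP Ptop) o0 -> Prop with
  | existT _ c ox =>
      match ox as ox0 return sieve (D := CP Ptop) (existT _ c ox0) -> Prop with
      | Some x => fun S => is_sieve S /\ @J (existT _ c x) (restrict_sieve S)
      | None => fun S => is_sieve S /\
          forall d (x : dP P d)
                 (f : hom (CP Ptop) (existT _ d (Some x)) (existT _ c None)),
            @J (existT _ d x) (restrict_sieve (pb_sieve f S))
      end
  end.
End Top.

(* Main.v *)
Require Import Defs.
From Stdlib Require Import ProofIrrelevance FunctionalExtensionality PropExtensionality ClassicalEpsilon.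
Set Implicit Arguments.
Unset Strict Implicit.

Lemma sieve_ext (D : Cat) (o : ob D) (S R : sieve o) :
  (forall e h, S e h <-> R e h) -> S = R.
Proof.
  intros H. unfold sieve in *. apply functional_extensionality_dep; intro e.
  apply functional_extensionality; intro h. apply propositional_extensionality; auto.
Qed.

Lemma J_ext (D : Cat) (J : coverage D) o (S R : sieve o) :
  J o S -> (forall e h, S e h <-> R e h) -> J o R.
Proof. intros H1 H2. rewrite <- (sieve_ext H2). exact H1. Qed.

Lemma J_up (D : Cat) (J : coverage D) (HJ : is_topology J) o (S R : sieve o) :
  J o S -> is_sieve R -> (forall e h, S e h -> R e h) -> J o R.
Proof.
  intros HS HR Hsub. destruct HJ as [H1 [H2 [H3 H4]]].
  apply (H4 o S R HS HR). intros e h Hh.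
  apply (J_ext (H2 e)). intros e' g. unfold max_sieve, pb_sieve. split; auto.
Qed.

Lemma J_sieve (D : Cat) (J : coverage D) (HJ : is_topology J) o (S : sieve o) :
  J o S -> is_sieve S.
Proof. destruct HJ as [H1 _]. apply H1. Qed.

Lemma J_max (D : Cat) (J : coverage D) (HJ : is_topology J) o : J o (max_sieve (o:=o)).
Proof. destruct HJ as [_ [H2 _]]. apply H2. Qed.

Lemma J_pb (D : Cat) (J : coverage D) (HJ : is_topology J) o (S : sieve o) a (f : hom D a o) :
  J o S -> J a (pb_sieve f S).
Proof. destruct HJ as [_ [_ [H3 _]]]. apply H3. Qed.

Lemma J_trans (D : Cat) (J : coverage D) (HJ : is_topology J) o (S R : sieve o) :
  J o S -> is_sieve R -> (forall e (h : hom D e o), S e h -> J e (pb_sieve h R)) -> J o R.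
Proof. destruct HJ as [_ [_ [_ H4]]]. apply H4. Qed.

Lemma pb_is_sieve (D : Cat) o a (f : hom D a o) (S : sieve o) :
  is_sieve S -> is_sieve (pb_sieve f S).
Proof. intros HS e h e' g H. unfold pb_sieve in *. rewrite cmp_assoc. apply HS; auto. Qed.

Definition closedS (D : Cat) (J : coverage D) o (S : sieve o) : Prop :=
  is_sieve S /\ forall e (k : hom D e o), J e (pb_sieve k S) -> S e k.

Lemma pb_pb (D : Cat) o a b (f : hom D a o) (g : hom D b a) (S : sieve o) e (h : hom D e b) :
  pb_sieve g (pb_sieve f S) h <-> pb_sieve (cmp f g) S h.
Proof. unfold pb_sieve. rewrite cmp_assoc. tauto. Qed.

Lemma pb_closed (D : Cat) (J : coverage D) o a (f : hom D a o) (S : sieve o) :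
  closedS J S -> closedS J (pb_sieve f S).
Proof.
  intros [HS Hc]. split. apply pb_is_sieve; auto.
  intros e k Hk. apply Hc. eapply J_ext. exact Hk. intros; apply pb_pb.
Qed.

Definition Omob (D : Cat) (J : coverage D) (o : ob D) := {S : sieve o | closedS J S}.
Definition Ommap (D : Cat) (J : coverage D) a b (f : hom D a b) (S : Omob J b) : Omob J a :=
  exist _ (pb_sieve f (proj1_sig S)) (pb_closed f (proj2_sig S)).
Lemma Ommap_id (D : Cat) (J : coverage D) a (x : Omob J a) : Ommap (idm a) x = x.
Proof. apply sig_eq. simpl. apply sieve_ext. intros. unfold pb_sieve. rewrite cmp_idl. tauto. Qed.
Lemma Ommap_cmp (D : Cat) (J : coverage D) a b c (g : hom D b c) (f : hom D a b) (x : Omob J c) :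
  Ommap (cmp g f) x = Ommap f (Ommap g x).
Proof. apply sig_eq. simpl. apply sieve_ext. intros. symmetry. apply pb_pb. Qed.
Definition Om (D : Cat) (J : coverage D) : Psh D :=
  @MkPsh D (Omob J) (@Ommap D J) (@Ommap_id D J) (@Ommap_cmp D J).

Lemma closed_id (D : Cat) o (S : sieve o) (HS : is_sieve S) e (k : hom D e o) :
  S o (idm o) -> S e k.
Proof. intros H. rewrite <- (cmp_idl k). apply HS; auto. Qed.

Lemma Om_sheaf (D : Cat) (J : coverage D) (HJ : is_topology J) : is_sheaf J (Om J).
Proof.
  intros o R HR s Hs.
  assert (HRs : is_sieve R) by (eapply J_sieve; eauto).
  assert (F1 : forall e (h : hom D e o) (H : R e h) e' (g : hom D e' e) (Hg : R e' (cmp h g))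
                 e'' (k : hom D e'' e'),
     proj1_sig (s e' (cmp h g) Hg) e'' k <-> proj1_sig (s e h H) e'' (cmp g k)).
  { intros. rewrite (Hs e h H e' g Hg). simpl. unfold pb_sieve. tauto. }
  set (X := fun e (k : hom D e o) => (fun e' (g : hom D e' e) =>
        exists H : R e' (cmp k g), proj1_sig (s e' (cmp k g) H) e' (idm e')) : sieve e).
  assert (F2 : forall e (h : hom D e o) (H : R e h) e' (g : hom D e' e),
             X e h e' g <-> proj1_sig (s e h H) e' g).
  { intros. unfold X. split.
    - intros [H' H2]. apply (F1 e h H e' g H') in H2. rewrite cmp_idr in H2. exact H2.
    - intros H2. exists (HRs _ _ _ g H). apply (F1 e h H). rewrite cmp_idr. exact H2. }
  assert (F3 : forall e (k : hom D e o) e0 (k' : hom D e0 e) e' (g : hom D e' e0),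
             X e0 (cmp k k') e' g <-> X e k e' (cmp k' g)).
  { intros. unfold X. rewrite (cmp_assoc k k' g). tauto. }
  assert (Xs : forall e k, is_sieve (X e k)).
  { intros e k e1 g e2 g' Hx. apply F3.
    destruct Hx as [H1 H2]. apply (F2 _ _ H1).
    apply closed_id. apply (proj1 (proj2_sig (s e1 (cmp k g) H1))). exact H2. }
  set (T := (fun e (k : hom D e o) => J e (X e k)) : sieve o).
  assert (Ts : is_sieve T).
  { intros e k e' g Hk. unfold T in *. eapply J_ext. apply (J_pb HJ g Hk).
    intros e'' g'. unfold pb_sieve. symmetry. apply F3. }
  assert (Tc : closedS J T).
  { split; auto. intros e k Hk. unfold T.
    apply (J_trans HJ Hk (Xs e k)). intros e' g Hg. unfold pb_sieve in Hg. unfold T in Hg.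
    eapply J_ext. exact Hg. intros. unfold pb_sieve. apply F3. }
  exists (exist _ T Tc). split.
  - intros e h H. apply sig_eq. simpl. apply sieve_ext. intros e' k. unfold pb_sieve, T.
    assert (E : forall e'' (g : hom D e'' e'), X e' (cmp h k) e'' g <-> pb_sieve k (proj1_sig (s e h H)) g).
    { intros. rewrite F3. rewrite (F2 _ _ H). unfold pb_sieve. tauto. }
    split.
    + intros Hj. apply (proj2_sig (s e h H)). eapply J_ext. exact Hj. exact E.
    + intros Hk. eapply J_ext. apply (J_max HJ e'). intros e'' g. rewrite E. unfold max_sieve.
      unfold pb_sieve. split; auto. intros _. apply (proj1 (proj2_sig (s e h H))). exact Hk.
  - intros y Hy. apply sig_eq. simpl. apply sieve_ext. intros e k.
    assert (Hyh : forall e (h : hom D e o) (H : R e h) e' (g : hom D e' e),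
              proj1_sig y e' (cmp h g) <-> proj1_sig (s e h H) e' g).
    { intros. rewrite <- (Hy e0 h H). simpl. unfold pb_sieve. tauto. }
    assert (EX : forall e' (g : hom D e' e), X e k e' g <-> R e' (cmp k g) /\ proj1_sig y e' (cmp k g)).
    { intros. unfold X. split.
      - intros [H1 H2]. split; auto. apply (Hyh _ _ H1) in H2. rewrite cmp_idr in H2. exact H2.
      - intros [H1 H2]. exists H1. apply (Hyh _ _ H1). rewrite cmp_idr. exact H2. }
    destruct (proj2_sig y) as [ys yc]. unfold T. split.
    + intros Hk. apply (J_up HJ (J_pb HJ k HR) (Xs e k)).
      intros e' g Hg. apply EX. split; auto.
    + intros Hk. apply yc. eapply J_up; eauto. apply pb_is_sieve; auto.
      intros e' g Hg. apply EX in Hg. apply Hg.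
Qed.

Lemma sheaf_sep (D : Cat) (J : coverage D) (A : Psh D) (HA : is_sheaf J A) o (R : sieve o)
  (x y : pobj A o) : J o R -> (forall e (h : hom D e o), R e h -> pmap A h x = pmap A h y) -> x = y.
Proof.
  intros HR Hxy.
  destruct (HA o R HR (fun e h _ => pmap A h x)) as [z [Hz Hu]].
  { intros. apply pmap_cmp. }
  transitivity z. apply Hu; auto. symmetry. apply Hu. intros. symmetry. auto.
Qed.

Lemma nat_c (D : Cat) (F G : Psh D) (u : NT F G) a b (f : hom D a b) x :
  ntc u a (pmap F f x) = pmap G f (ntc u b x).
Proof. apply (proj2_sig u). Qed.

Lemma subpf (D : Cat) (J : coverage D) (A : Psh D) (chi : NT A (Om J)) a b (k : hom D a b)
  (z : pobj A b) : proj1_sig (ntc chi b z) b (idm b) ->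
  proj1_sig (ntc chi a (pmap A k z)) a (idm a).
Proof.
  intros H. rewrite nat_c. simpl. unfold pb_sieve.
  apply closed_id. apply (proj1 (proj2_sig (ntc chi b z))). exact H.
Qed.
Definition subobj (D : Cat) (J : coverage D) (A : Psh D) (chi : NT A (Om J)) o :=
  {z : pobj A o | proj1_sig (ntc chi o z) o (idm o)}.
Definition submap (D : Cat) (J : coverage D) (A : Psh D) (chi : NT A (Om J)) a b (k : hom D a b)
  (z : subobj chi b) : subobj chi a :=
  exist _ (pmap A k (proj1_sig z)) (subpf k (proj2_sig z)).
Lemma submap_id (D : Cat) (J : coverage D) (A : Psh D) (chi : NT A (Om J)) a (x : subobj chi a) :
  submap (idm a) x = x.
Proof. apply sig_eq. simpl. apply pmap_id. Qed.
Lemma submap_cmp (D : Cat) (J : coverage D) (A : Psh D) (chi : NT A (Om J)) a b c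
  (g : hom D b c) (f : hom D a b) (x : subobj chi c) : submap (cmp g f) x = submap f (submap g x).
Proof. apply sig_eq. simpl. apply pmap_cmp. Qed.
Definition Sub (D : Cat) (J : coverage D) (A : Psh D) (chi : NT A (Om J)) : Psh D :=
  @MkPsh D (subobj chi) (@submap D J A chi) (@submap_id D J A chi) (@submap_cmp D J A chi).
Definition incl (D : Cat) (J : coverage D) (A : Psh D) (chi : NT A (Om J)) : NT (Sub chi) A.
Proof. refine (exist _ (fun a (z : pobj (Sub chi) a) => proj1_sig z) _). intros; reflexivity. Defined.

Lemma Sub_sheaf (D : Cat) (J : coverage D) (HJ : is_topology J) (A : Psh D) (HA : is_sheaf J A)
  (chi : NT A (Om J)) : is_sheaf J (Sub chi).
Proof.
  intros o R HR s Hs.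
  destruct (HA o R HR (fun e h H => proj1_sig (s e h H))) as [x [Hx Hu]].
  { intros. rewrite (Hs e h Hh e' g Hg). reflexivity. }
  assert (pf : proj1_sig (ntc chi o x) o (idm o)).
  { destruct (proj2_sig (ntc chi o x)) as [Hsv Hcl]. apply Hcl.
    apply (J_up HJ HR). apply pb_is_sieve; auto.
    intros e h Hh. unfold pb_sieve. rewrite cmp_idl.
    pose proof (proj2_sig (s e h Hh)) as P0. simpl in P0. rewrite <- (Hx e h Hh) in P0.
    rewrite nat_c in P0. simpl in P0. unfold pb_sieve in P0. rewrite cmp_idr in P0. exact P0. }
  exists (exist _ x pf). split.
  - intros e h Hh. apply sig_eq. simpl. apply Hx.
  - intros y Hy. apply sig_eq. simpl. apply Hu. intros e h Hh. rewrite <- (Hy e h Hh). reflexivity.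
Qed.

Lemma incl_mono (D : Cat) (J : coverage D) (A : Psh D) (chi : NT A (Om J)) : is_mono_sh J (incl chi).
Proof. intros H _ u v Heq a x. apply sig_eq. apply Heq. Qed.

Definition kpobj (D : Cat) (G A : Psh D) (m : NT G A) o :=
  {p : pobj G o * pobj G o | ntc m o (fst p) = ntc m o (snd p)}.
Lemma kpf (D : Cat) (G A : Psh D) (m : NT G A) a b (k : hom D a b) (p : kpobj m b) :
  ntc m a (fst (pmap G k (fst (proj1_sig p)), pmap G k (snd (proj1_sig p)))) =
  ntc m a (snd (pmap G k (fst (proj1_sig p)), pmap G k (snd (proj1_sig p)))).
Proof. simpl. rewrite !nat_c. f_equal. apply (proj2_sig p). Qed.
Definition kpmap (D : Cat) (G A : Psh D) (m : NT G A) a b (k : hom D a b) (p : kpobj m b) : kpobj m a :=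
  exist _ _ (kpf k p).
Lemma kpmap_id (D : Cat) (G A : Psh D) (m : NT G A) a (x : kpobj m a) : kpmap (idm a) x = x.
Proof. apply sig_eq. simpl. rewrite !pmap_id. destruct (proj1_sig x); reflexivity. Qed.
Lemma kpmap_cmp (D : Cat) (G A : Psh D) (m : NT G A) a b c (g : hom D b c) (f : hom D a b)
  (x : kpobj m c) : kpmap (cmp g f) x = kpmap f (kpmap g x).
Proof. apply sig_eq. simpl. rewrite !pmap_cmp. reflexivity. Qed.
Definition KP (D : Cat) (G A : Psh D) (m : NT G A) : Psh D :=
  @MkPsh D (kpobj m) (@kpmap D G A m) (@kpmap_id D G A m) (@kpmap_cmp D G A m).
Definition kp1 (D : Cat) (G A : Psh D) (m : NT G A) : NT (KP m) G.
Proof. refine (exist _ (fun a (p : pobj (KP m) a) => fst (proj1_sig p)) _). intros; reflexivity. Defined.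
Definition kp2 (D : Cat) (G A : Psh D) (m : NT G A) : NT (KP m) G.
Proof. refine (exist _ (fun a (p : pobj (KP m) a) => snd (proj1_sig p)) _). intros; reflexivity. Defined.

Lemma KP_sheaf (D : Cat) (J : coverage D) (G A : Psh D) (m : NT G A) :
  is_sheaf J G -> is_sheaf J A -> is_sheaf J (KP m).
Proof.
  intros HG HA o R HR s Hs.
  destruct (HG o R HR (fun e h H => fst (proj1_sig (s e h H)))) as [x1 [Hx1 Hu1]].
  { intros. rewrite (Hs e h Hh e' g Hg). reflexivity. }
  destruct (HG o R HR (fun e h H => snd (proj1_sig (s e h H)))) as [x2 [Hx2 Hu2]].
  { intros. rewrite (Hs e h Hh e' g Hg). reflexivity. }
  assert (pf : ntc m o (fst (x1, x2)) = ntc m o (snd (x1, x2))).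
  { simpl. apply (sheaf_sep HA HR). intros e h Hh. rewrite <- !nat_c.
    rewrite (Hx1 e h Hh), (Hx2 e h Hh). apply (proj2_sig (s e h Hh)). }
  exists (exist _ (x1, x2) pf). split.
  - intros e h Hh. apply sig_eq. simpl. rewrite (Hx1 e h Hh), (Hx2 e h Hh). destruct (proj1_sig (s e h Hh)); reflexivity.
  - intros y Hy. apply sig_eq. simpl. destruct y as [[y1 y2] py]. simpl. f_equal.
    + apply Hu1. intros e h Hh. rewrite <- (Hy e h Hh). reflexivity.
    + apply Hu2. intros e h Hh. rewrite <- (Hy e h Hh). reflexivity.
Qed.

Lemma mono_inj (D : Cat) (J : coverage D) (G A : Psh D) (m : NT G A) :
  is_sheaf J G -> is_sheaf J A -> is_mono_sh J m ->
  forall o x y, ntc m o x = ntc m o y -> x = y.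
Proof.
  intros HG HA Hm o x y Hxy.
  assert (E := Hm (KP m) (KP_sheaf HG HA) (kp1 m) (kp2 m)).
  refine (E _ o (exist _ (x, y) Hxy)).
  intros a p. simpl. apply (proj2_sig p).
Qed.

Lemma im_glue (D : Cat) (J : coverage D) (G A : Psh D) (m : NT G A)
  (HG : is_sheaf J G) (HA : is_sheaf J A) (Hm : is_mono_sh J m) o (R : sieve o) (z : pobj A o) :
  J o R -> (forall e (h : hom D e o), R e h -> exists w, ntc m e w = pmap A h z) ->
  exists w, ntc m o w = z.
Proof.
  intros HR Hi.
  set (s := fun e h H => proj1_sig (constructive_indefinite_description _ (Hi e h H))).
  assert (Hs : forall e h H, ntc m e (s e h H) = pmap A h z).
  { intros. unfold s. destruct (constructive_indefinite_description _ _); simpl; auto. }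
  destruct (HG o R HR s) as [w [Hw _]].
  { intros. apply (mono_inj HG HA Hm). rewrite Hs, nat_c, Hs. apply pmap_cmp. }
  exists w. apply (sheaf_sep HA HR). intros e h Hh. rewrite <- nat_c. rewrite (Hw e h Hh). apply Hs.
Qed.

Definition imS (D : Cat) (G A : Psh D) (m : NT G A) o (z : pobj A o) : sieve o :=
  fun e h => exists w, ntc m e w = pmap A h z.

Lemma imS_closed (D : Cat) (J : coverage D) (G A : Psh D) (m : NT G A)
  (HG : is_sheaf J G) (HA : is_sheaf J A) (Hm : is_mono_sh J m) o (z : pobj A o) :
  closedS J (imS m z).
Proof.
  split.
  - intros e h e' g [w Hw]. exists (pmap G g w). rewrite nat_c, Hw. symmetry. apply pmap_cmp.
  - intros e k Hk. unfold imS. apply (im_glue HG HA Hm Hk).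
    intros e' g [w Hw]. exists w. rewrite Hw. apply pmap_cmp.
Qed.

Definition chim (D : Cat) (J : coverage D) (G A : Psh D) (m : NT G A)
  (HG : is_sheaf J G) (HA : is_sheaf J A) (Hm : is_mono_sh J m) : NT A (Om J).
Proof.
  refine (exist _ (fun o (z : pobj A o) => (exist _ (imS m z) (imS_closed HG HA Hm z) : pobj (Om J) o)) _).
  intros a b f x. apply sig_eq. simpl. apply sieve_ext. intros e h. unfold imS, pb_sieve.
  rewrite pmap_cmp. tauto.
Defined.

Lemma chim_id (D : Cat) (J : coverage D) (G A : Psh D) (m : NT G A)
  (HG : is_sheaf J G) (HA : is_sheaf J A) (Hm : is_mono_sh J m) o (z : pobj A o) :
  proj1_sig (ntc (chim HG HA Hm) o z) o (idm o) <-> exists w, ntc m o w = z.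
Proof. simpl. unfold imS. rewrite pmap_id. tauto. Qed.

Definition chiSsv (C : Cat) (P : Doctrine C) (J : coverage (CP P)) c (S : Icar J c)
  (o : ob (CP P)) (f : hom C (projT1 o) c) : sieve o :=
  fun o' (k : hom (CP P) o' o) => proj1_sig S (projT1 o') (cmp f (proj1_sig k)) (projT2 o').
Arguments chiSsv {C P J c} S o f _ _.

Lemma chiS_closed (C : Cat) (P : Doctrine C) (J : coverage (CP P)) c (S : Icar J c)
  (o : ob (CP P)) (f : hom C (projT1 o) c) : closedS J (chiSsv S o f).
Proof.
  destruct (proj2_sig S) as [Sa Sb]. split.
  - intros o1 k o2 g Hk. unfold chiSsv in *. simpl. rewrite cmp_assoc.
    apply (Sa _ _ _ _ _ _ Hk). apply (proj2_sig g).
  - intros o' k Hk. unfold chiSsv. destruct o' as [d' x']. simpl.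
    apply Sb. simpl in Hk.
    set (I := {e : ob (CP P) & {g : hom (CP P) e (existT _ d' x') | pb_sieve k (chiSsv S o f) g}}).
    exists I, (fun i : I => projT1 i), (fun i : I => proj1_sig (projT2 i)). split.
    + eapply J_ext. exact Hk. intros e h. split.
      * intros H. exists (existT _ e (exist _ h H)). exists (idm e). symmetry. apply (@cmp_idr (CP P)).
      * intros [i [g ->]].
        apply pb_is_sieve. 2: apply (proj2_sig (projT2 i)).
        intros o1 k1 o2 g2 Hk1. unfold chiSsv in *. simpl. rewrite cmp_assoc.
        apply (Sa _ _ _ _ _ _ Hk1). apply (proj2_sig g2).
    + intros i. pose proof (proj2_sig (projT2 i)) as H. unfold pb_sieve, chiSsv in H. simpl in H.
      rewrite cmp_assoc in H. exact H.
Qed.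

Arguments chiS_closed {C P J c} S o f.

Definition chiS (C : Cat) (P : Doctrine C) (J : coverage (CP P)) c (S : Icar J c) :
  NT (homP P c) (Om J).
Proof.
  refine (exist _ (fun o (f : pobj (homP P c) o) =>
     (exist _ (chiSsv S o f) (chiS_closed S o f) : pobj (Om J) o)) _).
  intros a b k f. apply sig_eq. simpl. apply sieve_ext. intros e h.
  unfold chiSsv, pb_sieve. simpl. rewrite cmp_assoc. tauto.
Defined.

Lemma ext_unique (D : Cat) (J : coverage D) (X A : Psh D) (eta : NT X A)
  (Ha : is_sheafification J eta) (G : Psh D) (HG : is_sheaf J G) (u1 u2 : NT A G) :
  nteq (ntcomp u1 eta) (ntcomp u2 eta) -> nteq u1 u2.
Proof.
  intros H. destruct (proj2 Ha G HG (ntcomp u1 eta)) as [u [_ Hu]].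
  intros a x. rewrite (Hu u1 (fun _ _ => eq_refl) a x).
  symmetry. apply Hu. intros b y. symmetry. apply H.
Qed.

Definition chibar (C : Cat) (P : Doctrine C) (J : coverage (CP P)) (HJ : is_topology J)
  (a : ob C -> Psh (CP P)) (eta : forall c, NT (homP P c) (a c))
  (Ha : forall c, is_sheafification J (eta c)) c (S : Icar J c) : NT (a c) (Om J) :=
  proj1_sig (constructive_indefinite_description _ (proj2 (Ha c) (Om J) (Om_sheaf HJ) (chiS S))).

Lemma chibar_eta (C : Cat) (P : Doctrine C) (J : coverage (CP P)) (HJ : is_topology J)
  (a : ob C -> Psh (CP P)) (eta : forall c, NT (homP P c) (a c))
  (Ha : forall c, is_sheafification J (eta c)) c (S : Icar J c) o f :
  ntc (chibar HJ Ha S) o (ntc (eta c) o f) = ntc (chiS S) o f.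
Proof.
  exact (proj1 (proj2_sig (constructive_indefinite_description _
     (proj2 (Ha c) (Om J) (Om_sheaf HJ) (chiS S)))) o f).
Qed.

Definition psiZ (C : Cat) (P : Doctrine C) (J : coverage (CP P)) (HJ : is_topology J)
  (a : ob C -> Psh (CP P)) (eta : forall c, NT (homP P c) (a c))
  (Ha : forall c, is_sheafification J (eta c)) c (S : Icar J c) : Zcar J a c :=
  MkSub (Sub_sheaf HJ (proj1 (Ha c)) (chi := chibar HJ Ha S)) (incl_mono (chi := chibar HJ Ha S)).

Definition memZ (C : Cat) (P : Doctrine C) (J : coverage (CP P))
  (a : ob C -> Psh (CP P)) (eta : forall c, NT (homP P c) (a c)) c (m : Zcar J a c)
  (o : ob (CP P)) (f : hom C (projT1 o) c) : Prop :=
  exists w : pobj (so_dom m) o, ntc (so_m m) o w = ntc (eta c) o f.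
Arguments memZ {C P J a} eta {c} m o f.

Lemma memZ_eta (C : Cat) (P : Doctrine C) (J : coverage (CP P))
  (a : ob C -> Psh (CP P)) (eta : forall c, NT (homP P c) (a c)) c (m : Zcar J a c)
  (o : ob (CP P)) (f : hom C (projT1 o) c) :
  memZ eta m (existT _ (projT1 o) (projT2 o)) f <-> memZ eta m o f.
Proof. destruct o. tauto. Qed.

Lemma phiZ_closed (C : Cat) (P : Doctrine C) (J : coverage (CP P)) (HJ : is_topology J)
  (a : ob C -> Psh (CP P)) (eta : forall c, NT (homP P c) (a c))
  (Ha : forall c, is_sheafification J (eta c)) c (m : Zcar J a c) :
  @Iclosed C P J c (fun d f x => memZ eta m (existT _ d x) f).
Proof.
  split.
  - intros d f x e g y [w Hw] Hy.
    set (k := (exist _ g Hy : hom (CP P) (existT _ e y) (existT _ d x))).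
    exists (pmap (so_dom m) k w). rewrite nat_c, Hw, <- nat_c. reflexivity.
  - intros d f x [I [e [h [Hc Hi]]]]. unfold memZ.
    apply (im_glue (@so_sheaf _ _ _ m) (proj1 (Ha c)) (@so_mono _ _ _ m) Hc).
    intros e' k [i [g ->]]. specialize (Hi i).
    assert (Hi' : memZ eta m (e i) (cmp f (proj1_sig (h i)))).
    { apply memZ_eta. exact Hi. }
    destruct Hi' as [w Hw]. exists (pmap (so_dom m) g w).
    rewrite nat_c, Hw, <- !nat_c. simpl. f_equal. symmetry. apply cmp_assoc.
Qed.

Definition phiZ (C : Cat) (P : Doctrine C) (J : coverage (CP P)) (HJ : is_topology J)
  (a : ob C -> Psh (CP P)) (eta : forall c, NT (homP P c) (a c))
  (Ha : forall c, is_sheafification J (eta c)) c (m : Zcar J a c) : Icar J c :=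
  exist _ _ (phiZ_closed HJ Ha m).

Lemma phiZ_mem (C : Cat) (P : Doctrine C) (J : coverage (CP P)) (HJ : is_topology J)
  (a : ob C -> Psh (CP P)) (eta : forall c, NT (homP P c) (a c))
  (Ha : forall c, is_sheafification J (eta c)) c (m : Zcar J a c) o f :
  proj1_sig (phiZ HJ Ha m) (projT1 o) f (projT2 o) <-> memZ eta m o f.
Proof. destruct o. simpl. tauto. Qed.

Lemma phi_psi (C : Cat) (P : Doctrine C) (J : coverage (CP P)) (HJ : is_topology J)
  (a : ob C -> Psh (CP P)) (eta : forall c, NT (homP P c) (a c))
  (Ha : forall c, is_sheafification J (eta c)) c (S : Icar J c) d f x :
  proj1_sig (phiZ HJ Ha (psiZ HJ Ha S)) d f x <-> proj1_sig S d f x.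
Proof.
  simpl. unfold memZ. simpl. split.
  - intros [w Hw]. pose proof (proj2_sig w) as H. simpl in H. rewrite Hw in H.
    rewrite chibar_eta in H. simpl in H. unfold chiSsv in H. simpl in H. rewrite cmp_idr in H. exact H.
  - intros H. assert (pf : proj1_sig (ntc (chibar HJ Ha S) (existT _ d x) (ntc (eta c) (existT _ d x) f))
       (existT _ d x) (idm _)).
    { rewrite chibar_eta. simpl. unfold chiSsv. simpl. rewrite cmp_idr. exact H. }
    exists (@exist _ (fun z => proj1_sig (ntc (chibar HJ Ha S) (existT _ d x) z) (existT _ d x) (idm _)) (ntc (eta c) (existT (dP P) d x) f) pf). reflexivity.
Qed.

Lemma meet_closed (D : Cat) (J : coverage D) (HJ : is_topology J) o (S T : sieve o) :
  closedS J S -> closedS J T -> closedS J (fun e (h : hom D e o) => S e h /\ T e h).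
Proof.
  intros [Ss Sc] [Ts Tc]. split.
  - intros e h e' g [H1 H2]. split; auto.
  - intros e k Hk. split.
    + apply Sc. apply (J_up HJ Hk). apply pb_is_sieve; auto. intros e' g [H1 _]; auto.
    + apply Tc. apply (J_up HJ Hk). apply pb_is_sieve; auto. intros e' g [_ H2]; auto.
Qed.

Definition Ommeet (D : Cat) (J : coverage D) (HJ : is_topology J) (A : Psh D) (c1 c2 : NT A (Om J)) :
  NT A (Om J).
Proof.
  refine (exist _ (fun o (z : pobj A o) =>
    (exist _ _ (meet_closed HJ (proj2_sig (ntc c1 o z)) (proj2_sig (ntc c2 o z))) : pobj (Om J) o)) _).
  intros a b f x. apply sig_eq. simpl. apply sieve_ext. intros e h. unfold pb_sieve.
  rewrite !nat_c. simpl. unfold pb_sieve. tauto.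
Defined.

Lemma phiZ_order (C : Cat) (P : Doctrine C) (J : coverage (CP P)) (HJ : is_topology J)
  (a : ob C -> Psh (CP P)) (eta : forall c, NT (homP P c) (a c))
  (Ha : forall c, is_sheafification J (eta c)) c (m n : Zcar J a c) :
  so_le m n <-> Ile (phiZ HJ Ha m) (phiZ HJ Ha n).
Proof.
  split.
  - intros [u Hu] d f x [w Hw]. exists (ntc u _ w). rewrite <- Hw. exact (Hu _ w).
  - intros Hle.
    set (c1 := chim (@so_sheaf _ _ _ m) (proj1 (Ha c)) (@so_mono _ _ _ m)).
    set (c2 := chim (@so_sheaf _ _ _ n) (proj1 (Ha c)) (@so_mono _ _ _ n)).
    assert (E : nteq c1 (Ommeet HJ c1 c2)).
    { apply (ext_unique (Ha c) (Om_sheaf HJ)). intros o f. apply sig_eq. simpl.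
      apply sieve_ext. intros o' k. unfold imS. split.
      - intros H. split; auto. destruct H as [w Hw].
        rewrite <- nat_c in Hw. simpl in Hw.
        assert (H1 : memZ eta m o' (cmp f (proj1_sig k))) by (exists w; exact Hw).
        pose proof (Hle _ _ _ (proj2 (phiZ_mem HJ Ha m (o:=o') _) H1)) as H2.
        destruct (proj1 (phiZ_mem HJ Ha n (o:=o') _) H2) as [w' Hw']. exists w'. rewrite Hw'. rewrite <- nat_c. reflexivity.
      - tauto. }
    assert (Hex : forall o (w : pobj (so_dom m) o), exists w', ntc (so_m n) o w' = ntc (so_m m) o w).
    { intros o w. assert (H := E o (ntc (so_m m) o w)).
      assert (H1 : proj1_sig (ntc c1 o (ntc (so_m m) o w)) o (idm o)).
      { apply chim_id. exists w; reflexivity. }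
      rewrite H in H1. simpl in H1. destruct H1 as [_ H1]. destruct H1 as [w' Hw'].
      exists w'. rewrite Hw'. apply pmap_id. }
    set (F := fun o w => proj1_sig (constructive_indefinite_description _ (Hex o w))).
    assert (HF : forall o w, ntc (so_m n) o (F o w) = ntc (so_m m) o w).
    { intros. unfold F. destruct (constructive_indefinite_description _ _). simpl. auto. }
    assert (NF : forall a0 b (f : hom (CP P) a0 b) x,
               F a0 (pmap (so_dom m) f x) = pmap (so_dom n) f (F b x)).
    { intros. apply (mono_inj (@so_sheaf _ _ _ n) (proj1 (Ha c)) (@so_mono _ _ _ n)).
      rewrite HF, !nat_c, HF. reflexivity. }
    exists (exist _ F NF). intros o w. apply HF.
Qed.

Lemma phiZ_re (C : Cat) (P : Doctrine C) (J : coverage (CP P)) (HJ : is_topology J)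
  (a : ob C -> Psh (CP P)) (eta : forall c, NT (homP P c) (a c))
  (Ha : forall c, is_sheafification J (eta c)) c d (f : hom C d c) (m : Zcar J a c) (m' : Zcar J a d) :
  Zre eta f m m' -> Ire f (phiZ HJ Ha m) (phiZ HJ Ha m').
Proof.
  intros [u [Hu [q [Hq Hpb]]]] e g y. simpl. unfold memZ. split.
  - intros [w Hw]. exists (ntc q _ w). transitivity (ntc u _ (ntc (so_m m') _ w)).
    apply (Hq _ w). rewrite Hw. apply (Hu (existT (dP P) e y) g).
  - intros [w Hw].
    set (chi := ntcomp (chim (@so_sheaf _ _ _ m) (proj1 (Ha c)) (@so_mono _ _ _ m)) u).
    assert (Hex : forall o (z : pobj (Sub chi) o), exists w, ntc (so_m m) o w = ntc u o (proj1_sig z)).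
    { intros o z. pose proof (proj2_sig z) as H. simpl in H. unfold imS in H.
      destruct H as [w0 Hw0]. exists w0. rewrite Hw0. apply pmap_id. }
    set (F := fun o z => proj1_sig (constructive_indefinite_description _ (Hex o z))).
    assert (HF : forall o z, ntc (so_m m) o (F o z) = ntc u o (proj1_sig z)).
    { intros. unfold F. destruct (constructive_indefinite_description _ _). simpl. auto. }
    assert (NF : forall a0 b (k : hom (CP P) a0 b) x,
               F a0 (pmap (Sub chi) k x) = pmap (so_dom m) k (F b x)).
    { intros. apply (mono_inj (@so_sheaf _ _ _ m) (proj1 (Ha c)) (@so_mono _ _ _ m)).
      rewrite HF, (nat_c (so_m m)), HF. exact (nat_c u k (proj1_sig x)). }
    destruct (Hpb (Sub chi) (Sub_sheaf HJ (proj1 (Ha d)) (chi := chi)) (incl chi) (exist _ F NF))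
      as [w0 [[H1 H2] _]].
    { intros o z. symmetry. apply HF. }
    assert (pf : proj1_sig (ntc chi (existT _ e y) (ntc (eta d) (existT _ e y) g)) (existT _ e y) (idm _)).
    { simpl. exists w. rewrite pmap_id. rewrite Hw. symmetry. apply (Hu (existT (dP P) e y) g). }
    exists (ntc w0 _ (@exist _ (fun z => proj1_sig (ntc chi (existT (dP P) e y) z) (existT _ e y) (idm _))
                    (ntc (eta d) (existT (dP P) e y) g) pf)).
    apply H1.
Qed.

Lemma psiZ_re (C : Cat) (P : Doctrine C) (J : coverage (CP P)) (HJ : is_topology J)
  (a : ob C -> Psh (CP P)) (eta : forall c, NT (homP P c) (a c))
  (Ha : forall c, is_sheafification J (eta c)) c d (f : hom C d c) (S : Icar J c) (T : Icar J d) :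
  Ire f S T -> Zre eta f (psiZ HJ Ha S) (psiZ HJ Ha T).
Proof.
  intros HI.
  destruct (proj2 (Ha d) (a c) (proj1 (Ha c)) (ntcomp (eta c) (homPmap P f))) as [u [Hu _]].
  exists u. split; auto.
  assert (Hk : nteq (chibar HJ Ha T) (ntcomp (chibar HJ Ha S) u)).
  { apply (ext_unique (Ha d) (Om_sheaf HJ)). intros o g. simpl.
    rewrite chibar_eta. assert (E := Hu o g). simpl in E. rewrite E. rewrite chibar_eta. apply sig_eq. simpl. apply sieve_ext.
    intros o' k. unfold chiSsv. unfold Ire in HI. rewrite HI. rewrite cmp_assoc. tauto. }
  assert (pfq : forall o (z : pobj (Sub (chibar HJ Ha T)) o),
     proj1_sig (ntc (chibar HJ Ha S) o (ntc u o (proj1_sig z))) o (idm o)).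
  { intros o z. pose proof (proj2_sig z) as H. simpl in H. rewrite (Hk o _) in H. exact H. }
  set (Fq := fun o (z : pobj (Sub (chibar HJ Ha T)) o) =>
     (@exist _ (fun z' => proj1_sig (ntc (chibar HJ Ha S) o z') o (idm o)) _ (pfq o z)
       : pobj (Sub (chibar HJ Ha S)) o)).
  assert (NFq : forall a0 b (k : hom (CP P) a0 b) x,
      Fq a0 (pmap (Sub (chibar HJ Ha T)) k x) = pmap (Sub (chibar HJ Ha S)) k (Fq b x)).
  { intros. apply sig_eq. simpl. apply nat_c. }
  exists (exist _ Fq NFq). split.
  - intros o z. reflexivity.
  - intros H HH u' v Huv.
    assert (pfw : forall o (h : pobj H o),
       proj1_sig (ntc (chibar HJ Ha T) o (ntc u' o h)) o (idm o)).
    { intros o h. rewrite (Hk o _). simpl.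
      pose proof (Huv o h) as E. simpl in E. rewrite E.
      apply (proj2_sig (ntc v o h)). }
    set (Fw := fun o (h : pobj H o) =>
       (@exist _ (fun z' => proj1_sig (ntc (chibar HJ Ha T) o z') o (idm o)) _ (pfw o h)
         : pobj (Sub (chibar HJ Ha T)) o)).
    assert (NFw : forall a0 b (k : hom (CP P) a0 b) x,
        Fw a0 (pmap H k x) = pmap (Sub (chibar HJ Ha T)) k (Fw b x)).
    { intros. apply sig_eq. simpl. apply nat_c. }
    exists (exist _ Fw NFw). split. split.
    + intros o h. reflexivity.
    + intros o h. apply sig_eq. simpl. apply (Huv o h).
    + intros w' H1 H2 o h. apply sig_eq. apply (H1 o h).
Qed.

Definition good_iso (C : Cat) (D E : ob C -> Type)
  (leD : forall c, D c -> D c -> Prop) (leE : forall c, E c -> E c -> Prop)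
  (reD : forall c d, hom C d c -> D c -> D d -> Prop)
  (reE : forall c d, hom C d c -> E c -> E d -> Prop) : Prop :=
  exists (phi : forall c, D c -> E c) (psi : forall c, E c -> D c),
    (forall c (x y : D c), leD c x y <-> leE c (phi c x) (phi c y)) /\
    (forall c (z : E c), leE c (phi c (psi c z)) z /\ leE c z (phi c (psi c z))) /\
    (forall c d (f : hom C d c) (x : D c) (y : D d), reD c d f x y -> reE c d f (phi c x) (phi d y)) /\
    (forall c d (f : hom C d c) (x : E c) (y : E d), reE c d f x y -> reD c d f (psi c x) (psi d y)).

Lemma good_doc (C : Cat) (D E : ob C -> Type) leD leE reD reE :
  @good_iso C D E leD leE reD reE -> doc_iso leD leE reD reE.
Proof. intros [phi [psi [H1 [H2 [H3 _]]]]]. exists phi, psi. auto. Qed.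

Lemma good_inv (C : Cat) (D E : ob C -> Type) leD leE reD reE
  (tD : forall c x y z, leD c x y -> leD c y z -> leD c x z)
  (tE : forall c x y z, leE c x y -> leE c y z -> leE c x z) :
  @good_iso C D E leD leE reD reE -> @good_iso C E D leE leD reE reD.
Proof.
  intros [phi [psi [H1 [H2 [H3 H4]]]]]. exists psi, phi. split; [|split; [|split]]; auto.
  - intros c x y. rewrite H1. split.
    + intros H. apply (tE _ _ _ _ (proj1 (H2 c x))). apply (tE _ _ _ _ H). apply H2.
    + intros H. apply (tE _ _ _ _ (proj2 (H2 c x))). apply (tE _ _ _ _ H). apply H2.
  - intros c z. rewrite !H1. split; apply H2.
Qed.

Lemma good_comp (C : Cat) (D E F : ob C -> Type) leD leE leF reD reE reF
  (tF : forall c x y z, leF c x y -> leF c y z -> leF c x z) :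
  @good_iso C D E leD leE reD reE -> @good_iso C E F leE leF reE reF ->
  @good_iso C D F leD leF reD reF.
Proof.
  intros [phi [psi [H1 [H2 [H3 H4]]]]] [phi' [psi' [H1' [H2' [H3' H4']]]]].
  exists (fun c x => phi' c (phi c x)), (fun c z => psi c (psi' c z)).
  split; [|split; [|split]].
  - intros c x y. rewrite H1, H1'. tauto.
  - intros c z. split.
    + apply (tF _ _ (phi' c (psi' c z))). apply H1'. apply H2. apply H2'.
    + apply (tF _ _ (phi' c (psi' c z))). apply H2'. apply H1'. apply H2.
  - auto.
  - auto.
Qed.

Lemma so_le_trans (D : Cat) (J : coverage D) (A : Psh D) (m n p : SubObj J A) :
  so_le m n -> so_le n p -> so_le m p.
Proof.
  intros [u Hu] [v Hv]. exists (ntcomp v u). intros a x. simpl.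
  transitivity (ntc (so_m n) a (ntc u a x)). apply (Hv a). apply (Hu a).
Qed.

Lemma Ile_trans (C : Cat) (P : Doctrine C) (J : coverage (CP P)) c (S T U : Icar J c) :
  Ile S T -> Ile T U -> Ile S U.
Proof. unfold Ile. auto. Qed.

Lemma ZI_good (C : Cat) (P : Doctrine C) (J : coverage (CP P)) (HJ : is_topology J)
  (a : ob C -> Psh (CP P)) (eta : forall c, NT (homP P c) (a c))
  (Ha : forall c, is_sheafification J (eta c)) :
  good_iso (@Zle C P J a) (@Ile C P J) (@Zre C P J a eta) (@Ire C P J).
Proof.
  exists (fun c m => phiZ HJ Ha m), (fun c S => psiZ HJ Ha S).
  split; [|split; [|split]].
  - intros c x y. apply phiZ_order.
  - intros c z. split; intros d f x; apply phi_psi.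
  - intros. apply phiZ_re. auto.
  - intros. apply psiZ_re. auto.
Qed.

Lemma gen_is_sieve (D : Cat) (o : ob D) (I : Type) (e : I -> ob D) (h : forall i, hom D (e i) o) :
  is_sieve (gen_sieve h).
Proof.
  intros e1 k e2 g [i [g' ->]]. exists i, (cmp g' g). symmetry. apply cmp_assoc.
Qed.

Lemma lift_cmp (C : Cat) (P : Doctrine C) (a b c : ob (CP P)) (h : hom (CP P) b c) (k : hom (CP P) a b) :
  lift_hom (cmp h k) = cmp (lift_hom h) (lift_hom k).
Proof. apply sig_eq. reflexivity. Qed.

Lemma restrict_is_sieve (C : Cat) (P : Doctrine C) c x (S : sieve (D := CP (Ptop P)) (existT _ c (Some x))) :
  is_sieve S -> is_sieve (restrict_sieve S).
Proof.
  intros HS e h e' g H. unfold restrict_sieve in *. rewrite lift_cmp. apply HS. exact H.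
Qed.

Lemma Jtop_topology (C : Cat) (P : Doctrine C) (J : coverage (CP P)) (HJ : is_topology J) :
  is_topology (Jtop J).
Proof.
  split; [|split; [|split]].
  - intros [c [x|]] S; simpl; tauto.
  - intros [c [x|]]; simpl.
    + split. intros ? ? ? ? ?; exact I. eapply J_ext. apply (J_max HJ). intros. unfold max_sieve, restrict_sieve. tauto.
    + split. intros ? ? ? ? ?; exact I. intros d y f. eapply J_ext. apply (J_max HJ).
      intros. unfold max_sieve, restrict_sieve, pb_sieve. tauto.
  - intros [c [x|]] S [d [y|]] f; simpl.
    + intros [Ss HS]. split. apply pb_is_sieve; auto.
      set (f' := (exist _ (proj1_sig f) (proj2_sig f) : hom (CP P) (existT _ d y) (existT _ c x))).
      eapply J_ext. apply (J_pb HJ f' HS). intros e h. unfold pb_sieve, restrict_sieve.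
      assert (E : lift_hom (cmp f' h) = cmp f (lift_hom h)) by (apply sig_eq; reflexivity).
      rewrite E. tauto.
    + exfalso. destruct f as [g pf]. simpl in pf. exact pf.
    + intros [Ss HS]. split. apply pb_is_sieve; auto. apply HS.
    + intros [Ss HS]. split. apply pb_is_sieve; auto. intros d' y' f'.
      eapply J_ext. apply (HS _ _ (cmp f f')). intros e h. unfold restrict_sieve. symmetry. apply pb_pb.
  - intros [c [x|]] S R; simpl.
    + intros [Ss HS] HR Hh. split; auto.
      apply (J_trans HJ HS). apply restrict_is_sieve; auto.
      intros [e y] h Hs. destruct (Hh _ _ Hs) as [_ H2]. simpl in H2.
      eapply J_ext. exact H2. intros e0 k. unfold restrict_sieve, pb_sieve. rewrite lift_cmp. tauto.
    + intros [Ss HS] HR Hh. split; auto. intros d y f.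
      apply (J_trans HJ (HS d y f)). apply restrict_is_sieve. apply pb_is_sieve; auto.
      intros [e z] h Hs. unfold restrict_sieve, pb_sieve in Hs.
      destruct (Hh _ _ Hs) as [_ H2]. simpl in H2.
      eapply J_ext. exact H2. intros e0 k. unfold restrict_sieve, pb_sieve.
      rewrite lift_cmp. rewrite cmp_assoc. tauto.
Qed.

Lemma Iclosed_cov (C : Cat) (P : Doctrine C) (J : coverage (CP P)) (HJ : is_topology J) c (T : Icar J c)
  d (f : hom C d c) (x : dP P d) (R : sieve (D:=CP P) (existT _ d x)) :
  J _ R -> (forall e0 (k : hom (CP P) e0 (existT _ d x)), R e0 k ->
              proj1_sig T (projT1 e0) (cmp f (proj1_sig k)) (projT2 e0)) ->
  proj1_sig T d f x.
Proof.
  intros HR Hm. apply (proj2 (proj2_sig T)).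
  set (I := {e0 : ob (CP P) & {k : hom (CP P) e0 (existT _ d x) | R e0 k}}).
  exists I, (fun i : I => projT1 i), (fun i : I => proj1_sig (projT2 i)). split.
  - apply (J_up HJ HR). apply gen_is_sieve. intros e0 k H.
    exists (existT _ e0 (exist _ k H)), (idm e0). symmetry. apply (@cmp_idr (CP P)).
  - intros i. apply Hm. apply (proj2_sig (projT2 i)).
Qed.

Lemma restr_closed (C : Cat) (P : Doctrine C) (J : coverage (CP P)) c (S : Icar (Jtop J) c) :
  @Iclosed C P J c (fun d f x => proj1_sig S d f (Some x)).
Proof.
  destruct (proj2_sig S) as [Sa Sb]. split.
  - intros d f x e g y H Hy. apply (Sa d f (Some x) e g (Some y) H). exact Hy.
  - intros d f x [I [e [h [Hc Hi]]]].
    apply (Sb d f (Some x)).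
    exists I, (fun i => existT (fun c => dP (Ptop P) c) (projT1 (e i)) (Some (projT2 (e i)))),
      (fun i => lift_hom (h i)).
    split.
    + simpl. split. apply gen_is_sieve. eapply J_ext. exact Hc. intros e0 k. unfold restrict_sieve. split.
      * intros [i [g ->]]. exists i, (lift_hom g). apply sig_eq; reflexivity.
      * intros [i [g Hg]]. exists i, (exist _ (proj1_sig g) (proj2_sig g) : hom (CP P) e0 (e i)).
        apply sig_eq. exact (f_equal (@proj1_sig _ _) Hg).
    + intros i. apply Hi.
Qed.

Definition extP (C : Cat) (P : Doctrine C) (J : coverage (CP P)) c (T : Icar J c) :
  forall d, hom C d c -> option (dP P d) -> Prop :=
  fun d f ox => match ox with
                | Some x => proj1_sig T d f x
                | None => forall e (g : hom C e d) y, proj1_sig T e (cmp f g) y end.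
Arguments extP {C P J c} T d f ox.

Lemma extS_down (C : Cat) (P : Doctrine C) (J : coverage (CP P)) c (T : Icar J c)
  (o' : ob (CP (Ptop P))) (f' : hom C (projT1 o') c) :
  extP T (projT1 o') f' (projT2 o') ->
  forall e y (g : hom (CP (Ptop P)) (existT _ e (Some y)) o'), proj1_sig T e (cmp f' (proj1_sig g)) y.
Proof.
  destruct o' as [e1 [y1|]]; simpl; intros H e y g.
  - apply (proj1 (proj2_sig T) _ _ _ _ _ _ H). apply (proj2_sig g).
  - apply H.
Qed.

Lemma ext_closed (C : Cat) (P : Doctrine C) (J : coverage (CP P)) (HJ : is_topology J) c (T : Icar J c) :
  @Iclosed C (Ptop P) (Jtop J) c (extP T).
Proof.
  destruct (proj2_sig T) as [Ta Tb]. split.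
  - intros d f ox e g oy H Hy. destruct ox as [x|], oy as [y|]; simpl in *.
    + eapply Ta; eauto.
    + contradiction.
    + apply H.
    + intros e' g' y'. rewrite <- cmp_assoc. apply H.
  - intros d f ox [I [e [h [Hc Hi]]]]. destruct ox as [x|]; simpl.
    + simpl in Hc. destruct Hc as [_ Hc].
      apply (@Iclosed_cov C P J HJ c T d f x _ Hc). intros e0 k [i [g Hg]].
      pose proof (extS_down (Hi i) g) as H. simpl in H.
      assert (E : proj1_sig k = cmp (proj1_sig (h i)) (proj1_sig g)) by exact (f_equal (@proj1_sig _ _) Hg).
      rewrite E. rewrite cmp_assoc. exact H.
    + intros e0 g y. simpl in Hc. destruct Hc as [_ Hc].
      set (f' := (exist _ g Logic.I : hom (CP (Ptop P)) (existT _ e0 (Some y)) (existT _ d None))).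
      apply (@Iclosed_cov C P J HJ c T e0 (cmp f g) y _ (Hc e0 y f')). intros e1 k [i [g'' Hg]].
      pose proof (extS_down (Hi i) g'') as H. simpl in H.
      assert (E : cmp g (proj1_sig k) = cmp (proj1_sig (h i)) (proj1_sig g''))
        by exact (f_equal (@proj1_sig _ _) Hg).
      rewrite <- cmp_assoc. rewrite E. rewrite cmp_assoc. exact H.
Qed.

Lemma top_char (C : Cat) (P : Doctrine C) (J : coverage (CP P)) c (S : Icar (Jtop J) c) (HJ : is_topology J)
  d (f : hom C d c) :
  proj1_sig S d f None <-> forall e (g : hom C e d) y, proj1_sig S e (cmp f g) (Some y).
Proof.
  destruct (proj2_sig S) as [Sa Sb]. split.
  - intros H e g y. apply (Sa d f None e g (Some y) H). exact I.
  - intros H. apply (Sb d f None).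
    set (Ix := {e : ob C & {y : dP P e & hom C e d}}).
    exists Ix, (fun i : Ix => existT (fun c => dP (Ptop P) c) (projT1 i) (Some (projT1 (projT2 i)))),
      (fun i : Ix => (exist _ (projT2 (projT2 i)) I : hom (CP (Ptop P)) (existT (fun c => dP (Ptop P) c) (projT1 i) (Some (projT1 (projT2 i)))) (existT (fun c => dP (Ptop P) c) d None))).
    split.
    + simpl. split. apply gen_is_sieve. intros d' x' f'. eapply J_ext. apply (J_max HJ).
      intros e0 k. unfold max_sieve, restrict_sieve, pb_sieve. split; auto. intros _.
      exists (existT _ (projT1 e0) (existT _ (projT2 e0) (cmp (proj1_sig f') (proj1_sig k)))).
      exists (idm _). apply sig_eq. simpl. symmetry. apply cmp_idr.
    + intros i. apply H.
Qed.

Lemma II_good (C : Cat) (P : Doctrine C) (J : coverage (CP P)) (HJ : is_topology J) :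
  good_iso (@Ile C (Ptop P) (Jtop J)) (@Ile C P J) (@Ire C (Ptop P) (Jtop J)) (@Ire C P J).
Proof.
  exists (fun c S => exist _ _ (restr_closed S)), (fun c T => exist _ _ (ext_closed HJ T)).
  split; [|split; [|split]].
  - intros c S T. split.
    + intros H d f x. apply H.
    + intros H d f [x|] Hs.
      * apply H. exact Hs.
      * apply (proj2 (@top_char C P J c T HJ d f)).
        pose proof (proj1 (@top_char C P J c S HJ d f) Hs) as Hs'. intros e g y. apply H. apply Hs'.
  - intros c z. split; intros d f x H; exact H.
  - intros c d f S T H e g y. apply H.
  - intros c d f S T H e g [y|]; simpl.
    + apply H.
    + split.
      * intros H1 e' g' y'. rewrite <- cmp_assoc. apply H. apply H1.
      * intros H1 e' g' y'. apply H. rewrite cmp_assoc. apply H1.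
Qed.

Theorem proposition4p7
  (C : Cat) (P : Doctrine C) (J : coverage (CP P)) (HJ : is_topology J)
  (aP : ob C -> Psh (CP P)) (eP : forall c, NT (homP P c) (aP c))
  (HaP : forall c, is_sheafification J (eP c))
  (aT : ob C -> Psh (CP (Ptop P))) (eT : forall c, NT (homP (Ptop P) c) (aT c))
  (HaT : forall c, is_sheafification (@Jtop C P J) (eT c)) :
  doc_iso (@Zle C P J aP) (@Zle C (Ptop P) (@Jtop C P J) aT)
          (@Zre C P J aP eP) (@Zre C (Ptop P) (@Jtop C P J) aT eT) /\
  doc_iso (@Zle C (Ptop P) (@Jtop C P J) aT) (@Ile C (Ptop P) (@Jtop C P J))
          (@Zre C (Ptop P) (@Jtop C P J) aT eT) (@Ire C (Ptop P) (@Jtop C P J)) /\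
  doc_iso (@Ile C (Ptop P) (@Jtop C P J)) (@Ile C P J)
          (@Ire C (Ptop P) (@Jtop C P J)) (@Ire C P J) /\
  doc_iso (@Zle C P J aP) (@Ile C P J) (@Zre C P J aP eP) (@Ire C P J).
Proof.
  pose proof (ZI_good HJ HaP) as G4.
  pose proof (ZI_good (Jtop_topology HJ) HaT) as G2.
  pose proof (II_good HJ) as G3.
  assert (tZ : forall (C0 : Cat) (P0 : Doctrine C0) (J0 : coverage (CP P0)) a0 c (x y z : Zcar J0 a0 c),
     Zle x y -> Zle y z -> Zle x z) by (intros; eapply so_le_trans; eauto).
  assert (tI : forall (C0 : Cat) (P0 : Doctrine C0) (J0 : coverage (CP P0)) c (x y z : Icar J0 c),
     Ile x y -> Ile y z -> Ile x z) by (intros; eapply Ile_trans; eauto).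
  assert (G3i := good_inv (fun c => @tI C (Ptop P) (Jtop J) c) (fun c => @tI C P J c) G3).
  assert (G2i := good_inv (fun c => @tZ C (Ptop P) (Jtop J) aT c) (fun c => @tI C (Ptop P) (Jtop J) c) G2).
  assert (G1 := good_comp (fun c => @tZ C (Ptop P) (Jtop J) aT c) G4
                  (good_comp (fun c => @tZ C (Ptop P) (Jtop J) aT c) G3i G2i)).
  split; [|split; [|split]]; apply good_doc; auto.
Qed.
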